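(* Let $f$ be a librational traveling wave of the sine-Gordon equation. Then $0=\mu_1^{(0)}>\mu_2^{(0)}$.
   Context: A traveling wave of speed $c$ ($c^2\neq1$) of $u_{tt}-u_{xx}+\sin u=0$ is a real solution $f$ of $(c^2-1)f''+\sin f=0$, with energy $E$ given by $\tfrac12(c^2-1)(f')^2+1-\cos f=E$; it is librational if $0<E<2$, in which case $f$ is periodic with fundamental period $T$ (smallest $T>0$ with $f(z+T)=f(z)\pmod{2\pi}$). Let $\gamma=1/(c^2-1)$ and consider Hill's operator $L=\frac{d^2}{dz^2}+\gamma\cos(f(z))$. The periodic eigenvalues of $L$ are the $\mu\in\mathbb{R}$ for which $Lq=\mu q$ has a nontrivial solution with $q(z+T)=q(z)$; they form a sequence $\mu_0^{(0)}>\mu_1^{(0)}\ge\mu_2^{(0)}>\mu_3^{(0)}\ge\cdots\to-\infty$ (listed with multiplicity, in decreasing order). *)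

(* Defs.v *)
From Stdlib Require Import Reals Lra List ClassicalEpsilon.
From Coquelicot Require Import Coquelicot.
Open Scope R_scope.

Definition traveling_wave (c : R) (f : R -> R) : Prop :=
  (forall z, ex_derive f z /\ ex_derive (Derive f) z) /\
  (forall z, (c ^ 2 - 1) * Derive (Derive f) z + sin (f z) = 0).

Definition has_energy (c : R) (f : R -> R) (E : R) : Prop :=
  forall z, / 2 * (c ^ 2 - 1) * (Derive f z) ^ 2 + 1 - cos (f z) = E.

Definition period_mod_2pi (f : R -> R) (T : R) : Prop :=
  forall z, exists k : Z, f (z + T) = f z + 2 * IZR k * PI.

Definition fundamental_period (f : R -> R) (T : R) : Prop :=
  0 < T /\ period_mod_2pi f T /\
  (forall T', 0 < T' < T -> ~ period_mod_2pi f T').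

Definition periodic_solution (gamma : R) (f : R -> R) (T mu : R) (q : R -> R) : Prop :=
  (forall z, ex_derive q z /\ ex_derive (Derive q) z) /\
  (forall z, Derive (Derive q) z + gamma * cos (f z) * q z = mu * q z) /\
  (forall z, q (z + T) = q z).

Definition periodic_eigenvalue (gamma : R) (f : R -> R) (T mu : R) : Prop :=
  exists q, periodic_solution gamma f T mu q /\ exists z, q z <> 0.

Definition periodic_eigenspace_dim_ge2 (gamma : R) (f : R -> R) (T mu : R) : Prop :=
  exists q1 q2, periodic_solution gamma f T mu q1 /\ periodic_solution gamma f T mu q2 /\
    (forall a b, (forall z, a * q1 z + b * q2 z = 0) -> a = 0 /\ b = 0).

(* multiplicity of mu = dimension of the space of T-periodic solutions
   (which is at most 2, the solution space of the second order ODE being 2-dim) *)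
Definition pmult (gamma : R) (f : R -> R) (T mu : R) : nat :=
  if excluded_middle_informative (periodic_eigenspace_dim_ge2 gamma f T mu) then 2%nat
  else if excluded_middle_informative (periodic_eigenvalue gamma f T mu) then 1%nat
  else 0%nat.

Definition sum_mult (gamma : R) (f : R -> R) (T : R) (l : list R) : nat :=
  fold_right (fun nu acc => (pmult gamma f T nu + acc)%nat) 0%nat l.

Definition count_gt (gamma : R) (f : R -> R) (T mu : R) (k : nat) : Prop :=
  exists l : list R, NoDup l /\
    (forall nu, In nu l <-> (periodic_eigenvalue gamma f T nu /\ mu < nu)) /\
    sum_mult gamma f T l = k.

Definition count_ge (gamma : R) (f : R -> R) (T mu : R) (k : nat) : Prop :=
  exists l : list R, NoDup l /\
    (forall nu, In nu l <-> (periodic_eigenvalue gamma f T nu /\ mu <= nu)) /\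
    sum_mult gamma f T l = k.

(* mu = mu_n^{(0)}: the n-th (from 0) periodic eigenvalue in decreasing order,
   listed with multiplicity *)
Definition periodic_eig_index (gamma : R) (f : R -> R) (T : R) (n : nat) (mu : R) : Prop :=
  exists a b, count_gt gamma f T mu a /\ count_ge gamma f T mu b /\ (a <= n < b)%nat.

(* Main.v *)
Require Import Defs.
From Stdlib Require Import Reals Lra Lia ZArith List ClassicalEpsilon Classical.
From Coquelicot Require Import Coquelicot.
Open Scope R_scope.

Lemma isd_mult f g x df dg : is_derive f x df -> is_derive g x dg ->
  is_derive (fun t => f t * g t) x (df * g x + f x * dg).
Proof. intros H1 H2. apply (is_derive_mult f g x df dg H1 H2). intros; apply Rmult_comm. Qed.
Lemma isd_plus f g x df dg : is_derive f x df -> is_derive g x dg ->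
  is_derive (fun t => f t + g t) x (df + dg).
Proof. intros H1 H2. apply (is_derive_plus f g x df dg H1 H2). Qed.
Lemma isd_minus f g x df dg : is_derive f x df -> is_derive g x dg ->
  is_derive (fun t => f t - g t) x (df - dg).
Proof. intros H1 H2. apply (is_derive_minus f g x df dg H1 H2). Qed.
Lemma isd_scal f x k df : is_derive f x df -> is_derive (fun t => k * f t) x (k * df).
Proof. apply is_derive_scal. Qed.
Lemma isd_opp f x df : is_derive f x df -> is_derive (fun t => - f t) x (- df).
Proof. intros H. apply (is_derive_opp f x df H). Qed.
Lemma isd_const (a x : R) : is_derive (fun _ => a) x 0.
Proof. apply (is_derive_const a x). Qed.
Lemma isd_id (x : R) : is_derive (fun t => t) x 1.
Proof. apply (is_derive_id x). Qed.
Lemma isd_comp f g x df dg : is_derive f (g x) df -> is_derive g x dg ->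
  is_derive (fun t => f (g t)) x (dg * df).
Proof. intros H1 H2. apply (is_derive_comp f g x df dg H1 H2). Qed.
Lemma isd_refl f c x : ex_derive f (2*c - x) ->
  is_derive (fun t => f (2*c - t)) x (- Derive f (2*c - x)).
Proof. intros H. replace (- Derive f (2*c-x)) with ((0 - 1) * Derive f (2*c-x)) by ring.
  apply isd_comp. now apply Derive_correct.
  apply isd_minus. apply isd_const. apply isd_id. Qed.
Lemma isd_shift f c x : ex_derive f (x + c) ->
  is_derive (fun t => f (t + c)) x (Derive f (x + c)).
Proof. intros H. replace (Derive f (x+c)) with ((1 + 0) * Derive f (x+c)) by ring.
  apply isd_comp. now apply Derive_correct.
  apply isd_plus. apply isd_id. apply isd_const. Qed.

Lemma ex_cont f x : ex_derive f x -> continuity_pt f x.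
Proof. intros H. apply continuity_pt_filterlim. apply (ex_derive_continuous f x H). Qed.

Lemma isd_lim f x l : is_derive f x l -> derivable_pt_lim f x l.
Proof. intros H. now apply is_derive_Reals. Qed.

Lemma incr_pos W dW a b : a < b -> (forall x, is_derive W x (dW x)) ->
  (forall x, a < x < b -> dW x > 0) -> W a < W b.
Proof. intros Hab Hd Hp.
  destruct (MVT_cor2 W dW a b Hab) as [c [Hc1 Hc2]].
  intros c _; apply isd_lim, Hd.
  assert (dW c > 0) by (apply Hp; lra). nra. Qed.

Lemma mono_le W dW a b : a <= b -> (forall x, is_derive W x (dW x)) ->
  (forall x, a < x < b -> dW x <= 0) -> W b <= W a.
Proof. intros Hab Hd Hp. destruct (Req_dec a b). subst; lra.
  destruct (MVT_cor2 W dW a b) as [c [Hc1 Hc2]]. lra.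
  intros c _; apply isd_lim, Hd.
  assert (dW c <= 0) by (apply Hp; lra). nra. Qed.

Lemma deriv_left_nonneg q a b d : a < b -> is_derive q a d -> q a = 0 ->
  (forall z, a < z < b -> q z > 0) -> d >= 0.
Proof. intros Hab Hd H0 Hp. apply isd_lim in Hd.
  destruct (Rlt_or_le d 0) as [Hn|]; [|lra].
  destruct (Hd (-d)) as [del Hdel]. lra.
  set (h := Rmin (del/2) ((b-a)/2)).
  assert (Hh: 0 < h) by (unfold h; apply Rmin_pos; destruct del; simpl; lra).
  assert (Hh1: h <= del/2) by apply Rmin_l. assert (Hh2: h <= (b-a)/2) by apply Rmin_r.
  assert (Hd2 := Hdel h ltac:(lra) ltac:(rewrite Rabs_right; destruct del; simpl in *; lra)).
  rewrite H0 in Hd2. assert (q (a+h) > 0) by (apply Hp; lra).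
  assert (Hq: (q (a + h) - 0) / h > 0) by (unfold Rdiv; rewrite Rminus_0_r; apply Rmult_gt_0_compat; [lra| apply Rinv_0_lt_compat; lra]).
  apply Rabs_def2 in Hd2. lra. Qed.

Lemma deriv_right_nonpos q a b d : a < b -> is_derive q b d -> q b = 0 ->
  (forall z, a < z < b -> q z > 0) -> d <= 0.
Proof. intros Hab Hd H0 Hp. apply isd_lim in Hd.
  destruct (Rlt_or_le 0 d) as [Hn|]; [|lra].
  destruct (Hd d) as [del Hdel]. lra.
  set (h := - Rmin (del/2) ((b-a)/2)).
  assert (Hh: 0 < - h) by (unfold h; rewrite Ropp_involutive; apply Rmin_pos; destruct del; simpl; lra).
  assert (Hh1: -h <= del/2) by (unfold h; rewrite Ropp_involutive; apply Rmin_l).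
  assert (Hh2: -h <= (b-a)/2) by (unfold h; rewrite Ropp_involutive; apply Rmin_r).
  assert (Hd2 := Hdel h ltac:(lra) ltac:(rewrite Rabs_left; destruct del; simpl in *; lra)).
  rewrite H0 in Hd2. assert (q (b+h) > 0) by (apply Hp; lra).
  assert (Hq: (q (b + h) - 0) / h < 0).
  { unfold Rdiv; rewrite Rminus_0_r. assert (/ h < 0) by (apply Rinv_lt_0_compat; lra). nra. }
  apply Rabs_def2 in Hd2. lra. Qed.

Lemma cont_left_nonneg s a b : a < b -> continuity_pt s a ->
  (forall z, a < z < b -> s z > 0) -> s a >= 0.
Proof. intros Hab Hc Hp. destruct (Rlt_or_le (s a) 0) as [Hn|]; [|lra].
  unfold continuity_pt, continue_in, limit1_in, limit_in in Hc. simpl in Hc.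
  destruct (Hc (- s a)) as [al [Hal H]]. lra.
  set (h := Rmin (al/2) ((b-a)/2)).
  assert (Hh: 0 < h) by (unfold h; apply Rmin_pos; lra).
  assert (Hh1: h <= al/2) by apply Rmin_l. assert (Hh2: h <= (b-a)/2) by apply Rmin_r.
  assert (H2 := H (a + h)). unfold R_dist, D_x, no_cond in H2.
  assert (s (a+h) > 0) by (apply Hp; lra).
  assert (Rabs (s (a + h) - s a) < - s a).
  apply H2. split. split; auto. lra. replace (a + h - a) with h by ring. rewrite Rabs_right; lra.
  apply Rabs_def2 in H1. lra. Qed.

Lemma cont_right_nonneg s a b : a < b -> continuity_pt s b ->
  (forall z, a < z < b -> s z > 0) -> s b >= 0.
Proof. intros Hab Hc Hp. destruct (Rlt_or_le (s b) 0) as [Hn|]; [|lra].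
  unfold continuity_pt, continue_in, limit1_in, limit_in in Hc. simpl in Hc.
  destruct (Hc (- s b)) as [al [Hal H]]. lra.
  set (h := Rmin (al/2) ((b-a)/2)).
  assert (Hh: 0 < h) by (unfold h; apply Rmin_pos; lra).
  assert (Hh1: h <= al/2) by apply Rmin_l. assert (Hh2: h <= (b-a)/2) by apply Rmin_r.
  assert (H2 := H (b - h)). unfold R_dist, D_x, no_cond in H2.
  assert (s (b-h) > 0) by (apply Hp; lra).
  assert (Rabs (s (b - h) - s b) < - s b).
  apply H2. split. split; auto. lra. replace (b - h - b) with (-h) by ring. rewrite Rabs_left; lra.
  apply Rabs_def2 in H1. lra. Qed.

Lemma cont_pos_near s a : continuity_pt s a -> s a <> 0 ->
  exists del, del > 0 /\ forall z, a - del < z < a + del -> s z <> 0.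
Proof. intros Hc Hn.
  unfold continuity_pt, continue_in, limit1_in, limit_in in Hc. simpl in Hc.
  destruct (Hc (Rabs (s a))) as [al [Hal H]]. apply Rabs_pos_lt; auto.
  exists al. split; auto. intros z Hz Hz0.
  destruct (Req_dec z a). subst; auto.
  assert (H2 := H z). unfold R_dist, D_x, no_cond in H2.
  assert (Rabs (s z - s a) < Rabs (s a)).
  apply H2. split. split; auto. apply Rabs_def1; lra.
  rewrite Hz0 in H1. rewrite Rminus_0_l, Rabs_Ropp in H1. lra. Qed.

Lemma deriv_nz_near q a d : is_derive q a d -> q a = 0 -> d <> 0 ->
  exists del, del > 0 /\ forall z, a < z < a + del -> q z <> 0.
Proof. intros Hd H0 Hn. apply isd_lim in Hd.
  destruct (Hd (Rabs d)) as [del Hdel]. apply Rabs_pos_lt; auto.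
  exists del. split. destruct del; simpl; lra.
  intros z Hz Hq. assert (H2 := Hdel (z - a) ltac:(lra) ltac:(rewrite Rabs_right; lra)).
  replace (a + (z - a)) with z in H2 by ring. rewrite Hq, H0 in H2.
  replace ((0 - 0) / (z - a) - d) with (-d) in H2 by (field; lra).
  rewrite Rabs_Ropp in H2. lra. Qed.
Lemma first_zero q a b : (forall x, continuity_pt q x) -> a < b -> q b = 0 ->
  (exists del, del > 0 /\ forall z, a < z < a + del -> q z <> 0) ->
  exists b', a < b' <= b /\ q b' = 0 /\ forall z, a < z < b' -> q z <> 0.
Proof. intros Hc Hab Hb [del [Hdel Hnz]].
  set (F := fun y => exists x, (a < x <= b /\ q x = 0) /\ y = - x).
  assert (HFb : bound F). { exists (-a). intros y [x [[Hx _] ->]]. lra. }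
  assert (HFne : exists y, F y). { exists (-b). exists b. repeat split; auto; lra. }
  destruct (completeness F HFb HFne) as [L [HL1 HL2]].
  set (m := - L).
  assert (Hlow : forall x, a < x <= b -> q x = 0 -> m <= x).
  { intros x Hx Hq. assert (F (-x)) by (exists x; auto). specialize (HL1 _ H). unfold m; lra. }
  assert (Hgreat : forall l, (forall x, a < x <= b -> q x = 0 -> l <= x) -> l <= m).
  { intros l Hl. assert (L <= - l). apply HL2. intros y [x [[Hx Hq] ->]]. specialize (Hl x Hx Hq). lra. unfold m; lra. }
  assert (Hm1 : a + del <= m).
  { apply Hgreat. intros x Hx Hq. destruct (Rlt_or_le x (a + del)); auto.
    exfalso. apply (Hnz x); auto; lra. }
  assert (Hm2 : m <= b) by (apply Hlow; auto; lra).
  assert (Hqm : q m = 0).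
  { destruct (Req_dec (q m) 0); auto. exfalso.
    destruct (cont_pos_near q m (Hc m) H) as [eta [Heta Hn]].
    assert (m + eta/2 <= m). apply Hgreat. intros x Hx Hq.
    assert (m <= x) by (apply Hlow; auto).
    destruct (Rlt_or_le x (m + eta)). exfalso. apply (Hn x); auto; lra. lra. lra. }
  exists m. split. lra. split; auto. intros z Hz Hq.
  assert (m <= z) by (apply Hlow; auto; lra). lra. Qed.

Lemma sign_const q a b : (forall x, continuity_pt q x) ->
  (forall z, a < z < b -> q z <> 0) ->
  (forall z, a < z < b -> q z > 0) \/ (forall z, a < z < b -> q z < 0).
Proof. intros Hc Hn.
  destruct (classic (exists z, a < z < b /\ q z > 0)) as [[z1 [Hz1 Hq1]]|Hno].
  - left. intros z Hz. destruct (Rtotal_order (q z) 0) as [Hl|[He|Hg]]; auto.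
    + exfalso. destruct (IVT_gen q z1 z 0 Hc) as [x [Hx Hqx]].
      split. apply Rle_trans with (q z). apply Rmin_r. lra.
      apply Rle_trans with (q z1). lra. apply Rmax_l.
      apply (Hn x); auto. split.
      apply Rlt_le_trans with (Rmin z1 z). apply Rmin_glb_lt; lra. lra.
      apply Rle_lt_trans with (Rmax z1 z). lra. apply Rmax_lub_lt; lra.
    + exfalso; apply (Hn z); auto.
  - right. intros z Hz. destruct (Rtotal_order (q z) 0) as [Hl|[He|Hg]]; auto.
    exfalso; apply (Hn z); auto. exfalso; apply Hno; exists z; auto. Qed.
Lemma isd_expK K x : is_derive (fun t => exp (K * t)) x (K * exp (K * x)).
Proof. auto_derive; auto. ring. Qed.

Lemma gronwall E dE K a : (forall x, is_derive E x (dE x)) -> (forall x, 0 <= E x) ->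
  (forall x, Rabs (dE x) <= K * E x) -> E a = 0 -> forall x, E x = 0.
Proof. intros Hd Hp Hb Ha x.
  destruct (Rle_or_lt a x) as [Hx|Hx].
  - set (G := fun t => E t * exp (- K * t)).
    assert (HG : forall t, is_derive G t (dE t * exp (-K*t) + E t * (-K * exp (-K*t)))).
    { intros t. apply (isd_mult E (fun t => exp (-K*t))). apply Hd. apply (isd_expK (-K) t). }
    assert (G x <= G a).
    { apply (mono_le G _ a x Hx HG). intros t _.
      assert (dE t <= K * E t) by (specialize (Hb t); apply Rabs_le_between in Hb; lra).
      assert (0 < exp (-K*t)) by apply exp_pos. nra. }
    unfold G in H. rewrite Ha in H. assert (0 < exp (-K*x)) by apply exp_pos.
    specialize (Hp x). nra.
  - set (G := fun t => - (E t * exp (K * t))).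
    assert (HG : forall t, is_derive G t (- (dE t * exp (K*t) + E t * (K * exp (K*t))))).
    { intros t. apply isd_opp. apply (isd_mult E (fun t => exp (K*t))). apply Hd. apply (isd_expK K t). }
    assert (G a <= G x).
    { apply (mono_le G _ x a ltac:(lra) HG). intros t _.
      assert (- (K * E t) <= dE t) by (specialize (Hb t); apply Rabs_le_between in Hb; lra).
      assert (0 < exp (K*t)) by apply exp_pos. nra. }
    unfold G in H. rewrite Ha in H. assert (0 < exp (K*x)) by apply exp_pos.
    specialize (Hp x). nra. Qed.

Lemma abs_2xy x y : Rabs (2 * x * y) <= x^2 + y^2.
Proof. apply Rabs_le. pose proof (pow2_ge_0 (x - y)). pose proof (pow2_ge_0 (x + y)). split; nra. Qed.
Definition C2 (q : R -> R) := forall z, ex_derive q z /\ ex_derive (Derive q) z.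
Definition sol (V : R -> R) (mu : R) (q : R -> R) :=
  C2 q /\ forall z, Derive (Derive q) z + V z * q z = mu * q z.

Lemma sol_uniq V M mu q a : (forall z, Rabs (V z) <= M) -> sol V mu q ->
  q a = 0 -> Derive q a = 0 -> forall z, q z = 0.
Proof. intros HM [Hd He] Ha Hda.
  set (E := fun t => q t * q t + Derive q t * Derive q t).
  set (dE := fun t => Derive q t * q t + q t * Derive q t +
        (Derive (Derive q) t * Derive q t + Derive q t * Derive (Derive q) t)).
  assert (HE : forall t, is_derive E t (dE t)).
  { intros t. destruct (Hd t) as [H1 H2]. apply isd_plus; apply isd_mult; now apply Derive_correct. }
  assert (Hz := gronwall E dE (1 + Rabs mu + M) a HE).
  intros z. assert (E z = 0).
  { apply Hz.
    - intros t; unfold E; nra.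
    - intros t. unfold dE, E.
      replace (Derive (Derive q) t) with ((mu - V t) * q t) by (specialize (He t); lra).
      replace (Derive q t * q t + q t * Derive q t + ((mu - V t) * q t * Derive q t + Derive q t * ((mu - V t) * q t)))
        with ((2 * q t * Derive q t) * (1 + mu - V t)) by ring.
      rewrite Rabs_mult, (Rmult_comm (1 + Rabs mu + M)). apply Rmult_le_compat. apply Rabs_pos. apply Rabs_pos.
      replace (q t * q t + Derive q t * Derive q t) with (q t ^2 + Derive q t ^2) by ring. apply abs_2xy.
      apply Rle_trans with (Rabs 1 + Rabs mu + Rabs (V t)).
      unfold Rminus. eapply Rle_trans. apply Rabs_triang. rewrite Rabs_Ropp.
      apply Rplus_le_compat_r. apply Rabs_triang. rewrite Rabs_R1. specialize (HM t). lra.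
    - unfold E. rewrite Ha, Hda. lra. }
  unfold E in H. nra. Qed.

Lemma ex_derive_lin q1 q2 al be z : ex_derive q1 z -> ex_derive q2 z ->
  is_derive (fun t => al * q1 t + be * q2 t) z (al * Derive q1 z + be * Derive q2 z).
Proof. intros H1 H2. apply isd_plus; apply isd_scal; now apply Derive_correct. Qed.

Lemma sol_lin V mu q1 q2 al be : sol V mu q1 -> sol V mu q2 ->
  sol V mu (fun t => al * q1 t + be * q2 t).
Proof. intros [H1 E1] [H2 E2].
  assert (HD : forall t, Derive (fun t => al * q1 t + be * q2 t) t = al * Derive q1 t + be * Derive q2 t).
  { intros t. apply is_derive_unique. apply ex_derive_lin; [apply H1|apply H2]. }
  split. intros z. split.
  exists (al * Derive q1 z + be * Derive q2 z). apply ex_derive_lin; [apply H1|apply H2].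
  eapply ex_derive_ext. intros t; symmetry; apply HD.
  exists (al * Derive (Derive q1) z + be * Derive (Derive q2) z). apply ex_derive_lin; [apply H1|apply H2].
  intros z. rewrite (Derive_ext _ _ z HD).
  replace (Derive (fun t => al * Derive q1 t + be * Derive q2 t) z) with
    (al * Derive (Derive q1) z + be * Derive (Derive q2) z)
    by (symmetry; apply is_derive_unique; apply ex_derive_lin; [apply H1|apply H2]).
  specialize (E1 z). specialize (E2 z). nra. Qed.

Lemma sol_ext V mu p q : (forall z, p z = q z) -> sol V mu p -> sol V mu q.
Proof. intros Hpq [Hd He].
  assert (HD : forall t, Derive p t = Derive q t) by (intros t; apply Derive_ext; auto).
  split. intros z. split. eapply ex_derive_ext. apply Hpq. apply Hd.
  eapply ex_derive_ext. apply HD. apply Hd.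
  intros z. rewrite <- (Derive_ext _ _ z HD). rewrite <- Hpq. apply He. Qed.

Lemma sol_refl V mu q c : (forall z, V (2*c - z) = V z) -> sol V mu q ->
  sol V mu (fun z => q (2*c - z)).
Proof. intros HV [Hd He].
  assert (HD : forall t, Derive (fun z => q (2*c - z)) t = - Derive q (2*c - t)).
  { intros t. apply is_derive_unique. apply isd_refl. apply Hd. }
  assert (HD2 : forall t, is_derive (fun z => - Derive q (2*c - z)) t (- - Derive (Derive q) (2*c - t))).
  { intros t. apply isd_opp. apply isd_refl. apply Hd. }
  split. intros z. split. exists (- Derive q (2*c - z)). apply isd_refl, Hd.
  eapply ex_derive_ext. intros t; symmetry; apply HD. eexists; apply HD2.
  intros z. rewrite (Derive_ext _ _ z HD).
  replace (Derive (fun t => - Derive q (2*c - t)) z) with (- - Derive (Derive q) (2*c - z))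
    by (symmetry; apply is_derive_unique; apply HD2).
  rewrite <- HV. specialize (He (2*c - z)). lra. Qed.

Lemma even_deriv0 q c : (forall z, ex_derive q z) -> (forall z, q (2*c - z) = q z) -> Derive q c = 0.
Proof. intros Hd Hs.
  assert (Derive q c = Derive (fun t => q (2*c - t)) c) by (apply Derive_ext; intros; symmetry; auto).
  replace (Derive (fun t => q (2*c - t)) c) with (- Derive q (2*c - c)) in H
    by (symmetry; apply is_derive_unique; apply isd_refl; apply Hd).
  replace (2*c - c) with c in H by ring. lra. Qed.

Lemma sol_cont V mu q : sol V mu q -> forall x, continuity_pt q x.
Proof. intros [Hd _] x. apply ex_cont, Hd. Qed.

Lemma Derive_lin_eq (q1 q2 : R -> R) (al be z : R) : ex_derive q1 z -> ex_derive q2 z ->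
  Derive (fun t : R => al * q1 t + be * q2 t) z = al * Derive q1 z + be * Derive q2 z.
Proof. intros H1 H2. apply is_derive_unique. apply ex_derive_lin; auto. Qed.
Lemma isd_val (f : R -> R) (x l l' : R) : is_derive f x l -> l = l' -> is_derive f x l'.
Proof. intros H <-; auto. Qed.

Lemma wronsk_deriv V mu sig q s z : sol V mu q -> sol V sig s ->
  is_derive (fun t => Derive q t * s t - q t * Derive s t) z ((mu - sig) * q z * s z).
Proof. intros [Hq Eq] [Hs Es].
  destruct (Hq z) as [Hq1 Hq2]. destruct (Hs z) as [Hs1 Hs2].
  eapply isd_val. apply (isd_minus (fun t => Derive q t * s t) (fun t => q t * Derive s t));
   apply isd_mult; apply Derive_correct; eauto.
  specialize (Eq z). specialize (Es z). nra. Qed.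

Lemma sturm_core V mu sig q s a b : sol V mu q -> sol V sig s -> a < b ->
  q a = 0 -> q b = 0 -> (forall z, a < z < b -> q z > 0) ->
  (forall z, a < z < b -> s z > 0) -> mu <= sig.
Proof. intros Sq Ss Hab Ha Hb Hq Hs.
  destruct (Rle_or_lt mu sig) as [|Hlt]; auto. exfalso.
  set (W := fun t => Derive q t * s t - q t * Derive s t).
  assert (HW : W a < W b).
  { apply (incr_pos W (fun t => (mu - sig) * q t * s t) a b Hab).
    intros x; apply (wronsk_deriv V); auto.
    intros x Hx. specialize (Hq x Hx). specialize (Hs x Hx). cbv beta.
    assert (0 < mu - sig) by lra. repeat apply Rmult_gt_0_compat; auto. }
  destruct Sq as [Dq Eq]. destruct Ss as [Ds Es].
  assert (H1 : Derive q a >= 0) by (apply (deriv_left_nonneg q a b); auto; apply Derive_correct, Dq).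
  assert (H2 : Derive q b <= 0) by (apply (deriv_right_nonpos q a b); auto; apply Derive_correct, Dq).
  assert (H3 : s a >= 0) by (apply (cont_left_nonneg s a b); auto; apply ex_cont, Ds).
  assert (H4 : s b >= 0) by (apply (cont_right_nonneg s a b); auto; apply ex_cont, Ds).
  unfold W in HW. rewrite Ha, Hb in HW. nra. Qed.

Lemma sol_neg V mu q : sol V mu q -> sol V mu (fun t => -1 * q t + 0 * q t).
Proof. intros H. apply sol_lin; auto. Qed.

Lemma sturm V M mu sig q s a b : (forall z, Rabs (V z) <= M) -> sol V mu q -> sol V sig s ->
  a < b -> q a = 0 -> q b = 0 -> (exists z, q z <> 0) ->
  (forall z, a < z < b -> s z <> 0) -> mu <= sig.
Proof. intros HM Sq Ss Hab Ha Hb [z0 Hz0] Hs.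
  assert (Hd : Derive q a <> 0).
  { intros Hd. apply Hz0. apply (sol_uniq V M mu q a); auto. }
  destruct (deriv_nz_near q a (Derive q a)) as [del Hdel]; auto.
  apply Derive_correct, (proj1 Sq).
  destruct (first_zero q a b (sol_cont _ _ _ Sq) Hab Hb) as [b' [Hb' [Hqb' Hnz]]].
  exists del; auto.
  assert (Hs' : forall z, a < z < b' -> s z <> 0) by (intros; apply Hs; lra).
  destruct (sign_const q a b' (sol_cont _ _ _ Sq) Hnz) as [Pq|Nq];
  destruct (sign_const s a b' (sol_cont _ _ _ Ss) Hs') as [Ps|Ns].
  - apply (sturm_core V mu sig q s a b'); auto. lra.
  - apply (sturm_core V mu sig q _ a b' Sq (sol_neg _ _ _ Ss)); auto. lra.
    intros z Hz; specialize (Ns z Hz); lra.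
  - apply (sturm_core V mu sig _ s a b' (sol_neg _ _ _ Sq) Ss); try lra.
    intros z Hz; specialize (Nq z Hz); lra. auto.
  - apply (sturm_core V mu sig _ _ a b' (sol_neg _ _ _ Sq) (sol_neg _ _ _ Ss)); try lra.
    intros z Hz; specialize (Nq z Hz); lra. intros z Hz; specialize (Ns z Hz); lra. Qed.
Definition hill_setup V M z1 z0 mu0 mu2 q0 u s :=
  (forall z, Rabs (V z) <= M) /\ z1 < z0 /\
  (forall z, V (2*z1 - z) = V z) /\ (forall z, V (2*z0 - z) = V z) /\
  sol V mu0 q0 /\ sol V 0 u /\ sol V mu2 s /\ mu2 < 0 < mu0 /\
  (forall z, q0 z <> 0) /\ Derive q0 z1 = 0 /\ Derive q0 z0 = 0 /\
  u z1 = 0 /\ u (2*z0 - z1) = 0 /\ Derive u z1 <> 0 /\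
  (forall z, z1 < z < 2*z0 - z1 -> u z <> 0) /\
  (forall z, 2*z1 - z0 < z < z0 -> s z <> 0).

Lemma pEE V M z1 z0 mu0 mu2 q0 u s mu q :
  hill_setup V M z1 z0 mu0 mu2 q0 u s -> sol V mu q ->
  (forall z, q (2*z1 - z) = q z) -> (forall z, q (2*z0 - z) = q z) -> (exists z, q z <> 0) ->
  (mu = mu0 /\ exists al, forall z, q z = al * q0 z) \/ mu <= mu2.
Proof. intros (HM & H01 & HV1 & HV0 & S0 & Su & Ss & Hmu & Hq0 & Hq0'1 & Hq0'0 & Hu1 & Hu2 & Hu'1 & Hu & Hs) Sq E1 E0 Hnt.
  assert (Hdq : forall z, ex_derive q z) by (intros; apply (proj1 Sq)).
  destruct (Req_dec mu mu0) as [Heq|Hne].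
  - left. split; auto. subst mu. exists (q z1 / q0 z1). intros z.
    assert (Sr := sol_lin V mu0 q q0 1 (- (q z1 / q0 z1)) Sq S0).
    assert (Hr := sol_uniq V M mu0 _ z1 HM Sr).
    cbv beta in Hr. assert (Hz := Hr ltac:(field; auto)).
    rewrite (Derive_lin_eq q q0 1 (- (q z1 / q0 z1)) z1 (Hdq z1) (proj1 (proj1 S0 z1))) in Hz.
    rewrite Hq0'1, (even_deriv0 q z1 Hdq E1) in Hz. specialize (Hz ltac:(ring) z). lra.
  - right.
    set (W := fun t => Derive q t * q0 t - q t * Derive q0 t).
    destruct (MVT_cor2 W (fun t => (mu - mu0) * q t * q0 t) z1 z0 H01) as [c [Hc1 Hc2]].
    { intros c _. apply isd_lim. apply (wronsk_deriv V); auto. }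
    assert (HW1 : W z1 = 0) by (unfold W; rewrite Hq0'1, (even_deriv0 q z1 Hdq E1); ring).
    assert (HW0 : W z0 = 0) by (unfold W; rewrite Hq0'0, (even_deriv0 q z0 Hdq E0); ring).
    rewrite HW1, HW0 in Hc1.
    assert (Hqc : q c = 0).
    { assert ((mu - mu0) * q c * q0 c = 0).
      { apply Rmult_eq_reg_r with (z0 - z1). lra. lra. }
      apply Rmult_integral in H. destruct H as [H|H]; [|exfalso; apply (Hq0 c); auto].
      apply Rmult_integral in H. destruct H; auto. lra. }
    apply (sturm V M mu mu2 q s (2*z1 - c) c HM Sq Ss); auto. lra. rewrite E1; auto.
    intros z Hz. apply Hs. lra. Qed.

Lemma pOE V M z1 z0 mu0 mu2 q0 u s mu q :
  hill_setup V M z1 z0 mu0 mu2 q0 u s -> sol V mu q ->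
  (forall z, q (2*z1 - z) = - q z) -> (forall z, q (2*z0 - z) = q z) -> (exists z, q z <> 0) ->
  (mu = 0 /\ exists al, forall z, q z = al * u z) \/ mu <= mu2.
Proof. intros (HM & H01 & HV1 & HV0 & S0 & Su & Ss & Hmu & Hq0 & Hq0'1 & Hq0'0 & Hu1 & Hu2 & Hu'1 & Hu & Hs) Sq E1 E0 Hnt.
  assert (Hdq : forall z, ex_derive q z) by (intros; apply (proj1 Sq)).
  assert (Hq1 : q z1 = 0) by (specialize (E1 z1); replace (2*z1 - z1) with z1 in E1 by ring; lra).
  assert (Hq2 : q (2*z0 - z1) = 0) by (rewrite E0; auto).
  assert (Hle : mu <= 0).
  { apply (sturm V M mu 0 q u z1 (2*z0 - z1) HM Sq Su); auto. lra. }
  destruct (Req_dec mu 0) as [Heq|Hne].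
  - left. split; auto. subst mu. exists (Derive q z1 / Derive u z1). intros z.
    assert (Sr := sol_lin V 0 q u 1 (- (Derive q z1 / Derive u z1)) Sq Su).
    assert (Hr := sol_uniq V M 0 _ z1 HM Sr).
    cbv beta in Hr. assert (Hz := Hr ltac:(rewrite Hq1, Hu1; ring)).
    rewrite (Derive_lin_eq q u 1 (- (Derive q z1 / Derive u z1)) z1 (Hdq z1) (proj1 (proj1 Su z1))) in Hz.
    specialize (Hz ltac:(field; auto) z). lra.
  - right.
    assert (Hc : exists c, z1 < c < 2*z0 - z1 /\ q c = 0).
    { apply NNPP. intros Hno.
      assert (0 <= mu).
      { apply (sturm V M 0 mu u q z1 (2*z0 - z1) HM Su Sq); auto. lra.
        exists ((z1 + z0)/2). apply Hu. lra.
        intros z Hz Hqz. apply Hno. exists z; auto. }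
      lra. }
    destruct Hc as [c [Hc Hqc]].
    destruct (Rle_or_lt c z0).
    + apply (sturm V M mu mu2 q s z1 c HM Sq Ss); auto. lra.
      intros z Hz. apply Hs. lra.
    + apply (sturm V M mu mu2 q s z1 (2*z0 - c) HM Sq Ss); auto. lra. rewrite E0; auto.
      intros z Hz. apply Hs. lra. Qed.

Lemma pOO V M z1 z0 mu0 mu2 q0 u s mu q :
  hill_setup V M z1 z0 mu0 mu2 q0 u s -> sol V mu q ->
  (forall z, q (2*z1 - z) = - q z) -> (forall z, q (2*z0 - z) = - q z) -> (exists z, q z <> 0) ->
  mu <= mu2.
Proof. intros (HM & H01 & HV1 & HV0 & S0 & Su & Ss & Hmu & Hq0 & Hq0'1 & Hq0'0 & Hu1 & Hu2 & Hu'1 & Hu & Hs) Sq E1 E0 Hnt.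
  assert (Hq1 : q z1 = 0) by (specialize (E1 z1); replace (2*z1 - z1) with z1 in E1 by ring; lra).
  assert (Hq0z : q z0 = 0) by (specialize (E0 z0); replace (2*z0 - z0) with z0 in E0 by ring; lra).
  apply (sturm V M mu mu2 q s z1 z0 HM Sq Ss); auto.
  intros z Hz. apply Hs. lra. Qed.

Lemma pEO V M z1 z0 mu0 mu2 q0 u s mu q :
  hill_setup V M z1 z0 mu0 mu2 q0 u s -> sol V mu q ->
  (forall z, q (2*z1 - z) = q z) -> (forall z, q (2*z0 - z) = - q z) -> (exists z, q z <> 0) ->
  mu <= mu2.
Proof. intros (HM & H01 & HV1 & HV0 & S0 & Su & Ss & Hmu & Hq0 & Hq0'1 & Hq0'0 & Hu1 & Hu2 & Hu'1 & Hu & Hs) Sq E1 E0 Hnt.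
  assert (Hq0z : q z0 = 0) by (specialize (E0 z0); replace (2*z0 - z0) with z0 in E0 by ring; lra).
  apply (sturm V M mu mu2 q s (2*z1 - z0) z0 HM Sq Ss); auto; try lra. rewrite E1; auto.
  Qed.
Definition part (z1 z0 a b : R) (q : R -> R) :=
  fun z => (q z + a * q (2*z1 - z) + b * q (2*z0 - z) + a*b * q (2*z1 - (2*z0 - z))) / 4.

Lemma part_sol V mu q z1 z0 a b : (forall z, V (2*z1 - z) = V z) -> (forall z, V (2*z0 - z) = V z) ->
  sol V mu q -> sol V mu (part z1 z0 a b q).
Proof. intros H1 H0 Sq.
  assert (S1 := sol_refl V mu q z1 H1 Sq).
  assert (S0 := sol_refl V mu q z0 H0 Sq).
  assert (S10 := sol_refl V mu _ z0 H0 S1).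
  assert (A1 := sol_lin V mu _ _ 1 a Sq S1).
  assert (A2 := sol_lin V mu _ _ b (a*b) S0 S10).
  assert (A3 := sol_lin V mu _ _ (/4) (/4) A1 A2).
  eapply sol_ext. 2: apply A3. intros z. cbv beta. unfold part. field. Qed.

Lemma part_sym1 q z1 z0 a b : a * a = 1 -> (forall z, q (z + 4*(z0 - z1)) = q z) ->
  forall z, part z1 z0 a b q (2*z1 - z) = a * part z1 z0 a b q z.
Proof. intros Ha Hp z. unfold part.
  replace (2*z1 - (2*z1 - z)) with z by ring.
  replace (q (2*z0 - (2*z1 - z))) with (q (2*z1 - (2*z0 - z))) by (rewrite <- (Hp (2*z1 - (2*z0 - z))); f_equal; ring).
  replace (q (2*z1 - (2*z0 - (2*z1 - z)))) with (q (2*z0 - z)) by (rewrite <- (Hp (2*z1 - (2*z0 - (2*z1 - z)))); f_equal; ring).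
  assert (a = 1 \/ a = -1) as [-> | ->] by (destruct (Rtotal_order a 0) as [?|[?|?]]; nra); field. Qed.

Lemma part_sym0 q z1 z0 a b : b * b = 1 ->
  forall z, part z1 z0 a b q (2*z0 - z) = b * part z1 z0 a b q z.
Proof. intros Hb z. unfold part.
  replace (2*z0 - (2*z0 - z)) with z by ring.
  assert (b = 1 \/ b = -1) as [-> | ->] by (destruct (Rtotal_order b 0) as [?|[?|?]]; nra); field. Qed.

Lemma part_sum q z1 z0 z :
  part z1 z0 1 1 q z + part z1 z0 (-1) 1 q z + part z1 z0 1 (-1) q z + part z1 z0 (-1) (-1) q z = q z.
Proof. unfold part. field. Qed.

Lemma triv_or (p : R -> R) : (exists z, p z <> 0) \/ (forall z, p z = 0).
Proof. destruct (classic (exists z, p z <> 0)); auto. right. intros z.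
  destruct (Req_dec (p z) 0); auto. exfalso; eauto. Qed.

Lemma hill_classify V M z1 z0 mu0 mu2 q0 u s mu q :
  hill_setup V M z1 z0 mu0 mu2 q0 u s -> sol V mu q ->
  (forall z, q (z + 4*(z0 - z1)) = q z) -> (exists z, q z <> 0) ->
  (mu = mu0 /\ exists al, forall z, q z = al * q0 z) \/
  (mu = 0 /\ exists al, forall z, q z = al * u z) \/ mu <= mu2.
Proof. intros HS Sq Hp Hnt.
  destruct HS as (HM & H01 & HV1 & HV0 & S0 & Su & Ss & Hmu & Rest) eqn:HSe.
  assert (Hsol : forall a b, sol V mu (part z1 z0 a b q)) by (intros; apply part_sol; auto).
  destruct (Rle_or_lt mu mu2) as [Hle|Hgt]. right; right; auto.
  assert (T3 : forall z, part z1 z0 1 (-1) q z = 0).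
  { destruct (triv_or (part z1 z0 1 (-1) q)) as [Hn|]; auto. exfalso.
    assert (mu <= mu2); [|lra].
    apply (pEO V M z1 z0 mu0 mu2 q0 u s mu _ HS (Hsol 1 (-1))); auto.
    intros; rewrite part_sym1; auto; ring. intros; rewrite part_sym0; auto; ring. }
  assert (T4 : forall z, part z1 z0 (-1) (-1) q z = 0).
  { destruct (triv_or (part z1 z0 (-1) (-1) q)) as [Hn|]; auto. exfalso.
    assert (mu <= mu2); [|lra].
    apply (pOO V M z1 z0 mu0 mu2 q0 u s mu _ HS (Hsol (-1) (-1))); auto.
    intros; rewrite part_sym1; auto; ring. intros; rewrite part_sym0; auto; ring. }
  destruct (triv_or (part z1 z0 1 1 q)) as [N1|T1];
  destruct (triv_or (part z1 z0 (-1) 1 q)) as [N2|T2].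
  - exfalso.
    destruct (pEE V M z1 z0 mu0 mu2 q0 u s mu _ HS (Hsol 1 1)) as [[He _]|]; auto; try lra.
    intros; rewrite part_sym1; auto; ring. intros; rewrite part_sym0; auto; ring.
    destruct (pOE V M z1 z0 mu0 mu2 q0 u s mu _ HS (Hsol (-1) 1)) as [[He' _]|]; auto; try lra.
    intros; rewrite part_sym1; auto; ring. intros; rewrite part_sym0; auto; ring.
  - destruct (pEE V M z1 z0 mu0 mu2 q0 u s mu _ HS (Hsol 1 1)) as [[He [al Hal]]|]; auto; try lra.
    intros; rewrite part_sym1; auto; ring. intros; rewrite part_sym0; auto; ring.
    left. split; auto. exists al. intros z. rewrite <- (part_sum q z1 z0 z), T2, T3, T4, Hal. ring.
  - destruct (pOE V M z1 z0 mu0 mu2 q0 u s mu _ HS (Hsol (-1) 1)) as [[He [al Hal]]|]; auto; try lra.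
    intros; rewrite part_sym1; auto; ring. intros; rewrite part_sym0; auto; ring.
    right; left. split; auto. exists al. intros z. rewrite <- (part_sum q z1 z0 z), T1, T3, T4, Hal. ring.
  - exfalso. destruct Hnt as [z Hz]. apply Hz. rewrite <- (part_sum q z1 z0 z), T1, T2, T3, T4. ring.
Qed.
Lemma sin_lip x y : Rabs (sin x - sin y) <= Rabs (x - y).
Proof. destruct (Rtotal_order y x) as [H|[H|H]].
  - destruct (MVT_cor2 sin cos y x H) as [c [Hc _]]. intros; apply derivable_pt_lim_sin.
    rewrite Hc, Rabs_mult. pose proof (COS_bound c). assert (Rabs (cos c) <= 1) by (apply Rabs_le; lra).
    pose proof (Rabs_pos (x - y)). nra.
  - subst. unfold Rminus. rewrite !Rplus_opp_r, Rabs_R0. lra.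
  - destruct (MVT_cor2 sin cos x y H) as [c [Hc _]]. intros; apply derivable_pt_lim_sin.
    rewrite <- Rabs_Ropp, Ropp_minus_distr, Hc, Rabs_mult. pose proof (COS_bound c).
    assert (Rabs (cos c) <= 1) by (apply Rabs_le; lra).
    rewrite <- (Rabs_Ropp (x - y)), Ropp_minus_distr. pose proof (Rabs_pos (y - x)). nra. Qed.

Lemma decr_neg F dF a b : a < b -> (forall x, is_derive F x (dF x)) ->
  (forall x, a < x < b -> dF x < 0) -> F b < F a.
Proof. intros Hab Hd Hn.
  assert (- F a < - F b); [|lra].
  apply (incr_pos (fun t => - F t) (fun t => - dF t) a b Hab).
  intros x; apply isd_opp, Hd. intros x Hx; specialize (Hn x Hx); lra. Qed.

Lemma incr_pos' F dF a b : a < b -> (forall x, is_derive F x (dF x)) ->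
  (forall x, a < x < b -> dF x > 0) -> F a < F b.
Proof. apply incr_pos. Qed.

Lemma C2_lin_refl h c al : C2 h ->
  C2 (fun z => al * h (2*c - z)) /\
  (forall z, Derive (fun z => al * h (2*c - z)) z = - al * Derive h (2*c - z)) /\
  (forall z, Derive (Derive (fun z => al * h (2*c - z))) z = al * Derive (Derive h) (2*c - z)).
Proof. intros Hd.
  assert (HD : forall t, Derive (fun z => al * h (2*c - z)) t = - al * Derive h (2*c - t)).
  { intros t. apply is_derive_unique. eapply isd_val. apply isd_scal. apply isd_refl. apply Hd. ring. }
  assert (HD2 : forall t, is_derive (fun z => - al * Derive h (2*c - z)) t (al * Derive (Derive h) (2*c - t))).
  { intros t. eapply isd_val. apply isd_scal. apply isd_refl. apply Hd. ring. }
  split; [|split]; auto.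
  - intros z. split. exists (- al * Derive h (2*c - z)). eapply isd_val. apply isd_scal. apply isd_refl. apply Hd. ring.
    eapply ex_derive_ext. intros t; symmetry; apply HD. eexists; apply HD2.
  - intros z. rewrite (Derive_ext _ _ z HD). apply is_derive_unique, HD2. Qed.

Lemma pend_uniq gam h1 h2 a : C2 h1 -> C2 h2 ->
  (forall z, Derive (Derive h1) z = - gam * sin (h1 z)) ->
  (forall z, Derive (Derive h2) z = - gam * sin (h2 z)) ->
  h1 a = h2 a -> Derive h1 a = Derive h2 a -> forall z, h1 z = h2 z.
Proof. intros D1 D2 E1 E2 Ha Hda.
  set (E := fun t => (h1 t - h2 t) * (h1 t - h2 t) + (Derive h1 t - Derive h2 t) * (Derive h1 t - Derive h2 t)).
  set (dE := fun t => (Derive h1 t - Derive h2 t) * (h1 t - h2 t) + (h1 t - h2 t) * (Derive h1 t - Derive h2 t)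
     + ((Derive (Derive h1) t - Derive (Derive h2) t) * (Derive h1 t - Derive h2 t) + (Derive h1 t - Derive h2 t) * (Derive (Derive h1) t - Derive (Derive h2) t))).
  assert (HE : forall t, is_derive E t (dE t)).
  { intros t. destruct (D1 t) as [A1 B1]. destruct (D2 t) as [A2 B2].
    assert (P1 := isd_minus h1 h2 t _ _ (Derive_correct _ _ A1) (Derive_correct _ _ A2)).
    assert (P2 := isd_minus (Derive h1) (Derive h2) t _ _ (Derive_correct _ _ B1) (Derive_correct _ _ B2)).
    apply (isd_plus (fun t => (h1 t - h2 t) * (h1 t - h2 t)) (fun t => (Derive h1 t - Derive h2 t) * (Derive h1 t - Derive h2 t))).
    apply (isd_mult (fun t => h1 t - h2 t) (fun t => h1 t - h2 t)); auto.
    apply (isd_mult (fun t => Derive h1 t - Derive h2 t) (fun t => Derive h1 t - Derive h2 t)); auto. }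
  assert (Hz := gronwall E dE (1 + Rabs gam) a HE).
  intros z. assert (E z = 0).
  { apply Hz.
    - intros t; unfold E; cbv beta. apply Rplus_le_le_0_compat; apply Rle_0_sqr.
    - intros t. unfold dE, E. cbv beta. rewrite E1, E2.
      set (d := h1 t - h2 t). set (d' := Derive h1 t - Derive h2 t).
      replace (d' * d + d * d' + ((- gam * sin (h1 t) - - gam * sin (h2 t)) * d' + d' * (- gam * sin (h1 t) - - gam * sin (h2 t))))
        with (2 * d * d' + 2 * d' * (- gam) * (sin (h1 t) - sin (h2 t))) by ring.
      eapply Rle_trans. apply Rabs_triang.
      pose proof (abs_2xy d d').
      assert (Rabs (2 * d' * - gam * (sin (h1 t) - sin (h2 t))) <= Rabs gam * (d*d + d'*d')).
      { rewrite !Rabs_mult, Rabs_Ropp. pose proof (sin_lip (h1 t) (h2 t)). fold d in H0.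
        pose proof (abs_2xy d' d). rewrite !Rabs_mult in H1.
        assert (Rabs 2 * Rabs d' * Rabs gam * Rabs (sin (h1 t) - sin (h2 t)) <= Rabs gam * (Rabs 2 * Rabs d' * Rabs d)).
        { pose proof (Rabs_pos gam). pose proof (Rabs_pos d'). pose proof (Rabs_pos 2).
          pose proof (Rabs_pos (sin (h1 t) - sin (h2 t))). 
          assert (0 <= Rabs 2 * Rabs d' * Rabs gam) by (repeat apply Rmult_le_pos; auto).
          replace (Rabs gam * (Rabs 2 * Rabs d' * Rabs d)) with ((Rabs 2 * Rabs d' * Rabs gam) * Rabs d) by ring.
          apply Rmult_le_compat_l; auto. }
        pose proof (Rabs_pos gam). replace (d' ^ 2 + d ^ 2) with (d * d + d' * d') in H1 by ring. nra. }
      replace (d^2 + d'^2) with (d*d + d'*d') in H by ring. lra.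
    - unfold E. rewrite Ha, Hda. lra. }
  unfold E in H. cbv beta in H. pose proof (Rle_0_sqr (h1 z - h2 z)). pose proof (Rle_0_sqr (Derive h1 z - Derive h2 z)). unfold Rsqr in *. nra. Qed.
Definition pend gam E h := C2 h /\ (forall z, Derive (Derive h) z = - gam * sin (h z)) /\
  (forall z, (Derive h z)^2 = 2*gam*(E - 1 + cos (h z))).

Lemma sin_neg_range x : -PI < x < 0 -> sin x < 0.
Proof. intros H. rewrite <- (Ropp_involutive x), sin_neg. assert (0 < sin (-x)) by (apply sin_gt_0; lra). lra. Qed.

Lemma cos_lt_1_range x : 0 < x < PI -> cos x < 1.
Proof. intros H. assert (0 < sin x) by (apply sin_gt_0; lra). pose proof (sin2_cos2 x).
  unfold Rsqr in H1. pose proof (COS_bound x). nra. Qed.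

Lemma cos_eq_1_range x : -PI < x < PI -> cos x = 1 -> x = 0.
Proof. intros H Hc. destruct (Rtotal_order x 0) as [Hl|[He|Hg]]; auto.
  rewrite <- cos_neg in Hc. assert (cos (-x) < 1) by (apply cos_lt_1_range; lra). lra.
  assert (cos x < 1) by (apply cos_lt_1_range; lra). lra. Qed.

Lemma P_periodic h T : fundamental_period h T -> (forall z, -PI < h z < PI) -> forall z, h (z + T) = h z.
Proof. intros [HT [Hp _]] Hr z. destruct (Hp z) as [k Hk].
  assert (Hk0 : k = 0%Z).
  { pose proof (Hr z). pose proof (Hr (z+T)). pose proof PI_RGT_0.
    assert (-1 < IZR k < 1).
    { split.
      - apply Rmult_lt_reg_r with (2*PI). lra. nra.
      - apply Rmult_lt_reg_r with (2*PI). lra. nra. }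
    destruct H2 as [H2 H3]. apply lt_IZR in H2. apply lt_IZR in H3. lia. }
  subst k. rewrite Hk. simpl. ring. Qed.

Lemma P_dperiodic h T : C2 h -> (forall z, h (z + T) = h z) -> forall z, Derive h (z + T) = Derive h z.
Proof. intros Hd Hp z.
  rewrite <- (Derive_ext (fun t => h (t + T)) h z Hp).
  symmetry. apply is_derive_unique. apply isd_shift. apply Hd. Qed.

Lemma P_max h T : C2 h -> 0 < T -> (forall z, h (z + T) = h z) ->
  exists z1, 0 <= z1 <= T /\ (forall c, 0 <= c <= T -> h c <= h z1) /\ Derive h z1 = 0.
Proof. intros Hd HT Hp.
  destruct (continuity_ab_maj h 0 T) as [z1 [Hm Hz1]]. lra. intros c _; apply ex_cont, Hd.
  exists z1. split; auto. split; auto.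
  assert (Hloc : forall x, z1 - T < x -> x < z1 + T -> h x <= h z1).
  { intros x H1 H2. destruct (Rlt_or_le x 0).
    - rewrite <- Hp. apply Hm. lra.
    - destruct (Rle_or_lt x T). apply Hm; lra.
      replace x with ((x - T) + T) by ring. rewrite Hp. apply Hm. lra. }
  assert (pr := ex_derive_Reals_0 h z1 (proj1 (Hd z1))).
  rewrite <- (Derive_Reals h z1 pr). apply (deriv_maximum h (z1 - T) (z1 + T) z1 pr); try lra; auto. Qed.

Lemma P_z1pos gam E h T z1 : 0 < gam -> 0 < E < 2 -> pend gam E h -> (forall z, -PI < h z < PI) ->
  0 < T -> (forall z, h (z + T) = h z) -> 0 <= z1 <= T -> (forall c, 0 <= c <= T -> h c <= h z1) ->
  Derive h z1 = 0 -> h z1 > 0.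
Proof. intros Hg HE [Hd [Heq Hen]] Hr HT Hp Hz1 Hm Hd1.
  assert (Hc : cos (h z1) = 1 - E).
  { specialize (Hen z1). rewrite Hd1 in Hen. apply Rmult_eq_reg_l with (2*gam); [|lra]. nra. }
  assert (Hn0 : h z1 <> 0) by (intros H; rewrite H, cos_0 in Hc; lra).
  destruct (Rtotal_order (h z1) 0) as [Hl|[He|Hgt]]; auto; [|contradiction].
  exfalso.
  assert (Hdp := P_dperiodic h T Hd Hp 0). rewrite Rplus_0_l in Hdp.
  assert (Derive h 0 < Derive h T); [|lra].
  apply (incr_pos (Derive h) (Derive (Derive h)) 0 T HT).
  intros x; apply Derive_correct, Hd.
  intros x Hx. rewrite Heq. assert (sin (h x) < 0); [|nra].
  apply sin_neg_range. split. apply Hr. assert (h x <= h z1) by (apply Hm; lra). lra. Qed.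

Lemma P_zero_after gam E h z1 : 0 < gam -> pend gam E h -> (forall z, -PI < h z < PI) ->
  h z1 > 0 -> Derive h z1 = 0 -> exists w, z1 < w /\ h w = 0.
Proof. intros Hg [Hd [Heq Hen]] Hr Hz1 Hd1.
  assert (Hex : exists w, z1 < w /\ h w <= 0).
  { apply NNPP. intros Hno.
    assert (Hpos : forall w, z1 <= w -> h w > 0).
    { intros w Hw. destruct (Req_dec w z1). subst; auto.
      destruct (Rle_or_lt (h w) 0); auto. exfalso; apply Hno; exists w; split; auto; lra. }
    assert (Hdd : forall x, z1 <= x -> Derive (Derive h) x < 0).
    { intros x Hx. rewrite Heq. assert (0 < sin (h x)); [|nra].
      apply sin_gt_0. apply Hpos; auto. apply Hr. }
    set (a := z1 + 1).
    assert (Ha : Derive h a < 0).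
    { rewrite <- Hd1. apply (decr_neg (Derive h) (Derive (Derive h)) z1 a). unfold a; lra.
      intros x; apply Derive_correct, Hd. intros x Hx; apply Hdd; lra. }
    set (del := - Derive h a).
    set (w := a + (h a + 1) / del).
    assert (Hdel : del > 0) by (unfold del; lra).
    assert (Hha : h a > 0) by (apply Hpos; unfold a; lra).
    assert (Hwa : a < w). { unfold w. assert ((h a + 1)/del > 0) by (apply Rdiv_lt_0_compat; lra). lra. }
    destruct (MVT_cor2 h (Derive h) a w Hwa) as [c [Hc1 Hc2]].
    { intros c _; apply isd_lim, Derive_correct, Hd. }
    assert (Hdc : Derive h c < Derive h a).
    { apply (decr_neg (Derive h) (Derive (Derive h)) a c). lra.
      intros x; apply Derive_correct, Hd. intros x Hx; apply Hdd; unfold a in *; lra. }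
    assert (Hdc' : Derive h c < - del) by (unfold del; lra).
    assert (h w <= h a - del * (w - a)).
    { assert (Derive h c * (w - a) <= - del * (w - a)) by (apply Rmult_le_compat_r; lra). lra. }
    assert (del * (w - a) = h a + 1) by (unfold w; field; lra).
    assert (h w > 0) by (apply Hpos; unfold a in *; lra). lra. }
  destruct Hex as [w [Hw Hhw]].
  assert (Hc : continuity h) by (intros x; apply ex_cont, Hd).
  destruct (IVT_gen h z1 w 0 Hc) as [x [Hx Hhx]].
  { split. apply Rle_trans with (h w). apply Rmin_r. auto. apply Rle_trans with (h z1). lra. apply Rmax_l. }
  rewrite Rmin_left in Hx by lra. rewrite Rmax_right in Hx by lra.
  exists x. split; auto. destruct (Req_dec x z1). subst; lra. lra. Qed.
Lemma pend_struct gam E T h : 0 < gam -> 0 < E < 2 -> pend gam E h ->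
  (forall z, -PI < h z < PI) -> fundamental_period h T ->
  exists z1 z0, 4*(z0 - z1) = T /\ z1 < z0 /\ (forall z, h (2*z1 - z) = h z) /\
    (forall z, h (2*z0 - z) = - h z) /\ Derive h z1 = 0 /\ h z0 = 0 /\
    (forall z, z1 < z < 2*z0 - z1 -> Derive h z <> 0) /\
    (forall z, 2*z1 - z0 < z < z0 -> h z <> 0) /\ (forall z, h (z + T) = h z).
Proof. intros Hg HE HP Hr HF.
  assert (HP' := HP). destruct HP' as [Hd [Heq Hen]].
  assert (HT : 0 < T) by apply HF.
  assert (Hp := P_periodic h T HF Hr).
  destruct (P_max h T Hd HT Hp) as [z1 [Hz1 [Hm Hd1]]].
  assert (Hz1p := P_z1pos gam E h T z1 Hg HE HP Hr HT Hp Hz1 Hm Hd1).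
  destruct (P_zero_after gam E h z1 Hg HP Hr Hz1p Hd1) as [w [Hw Hhw]].
  assert (Hc : forall x, continuity_pt h x) by (intros x; apply ex_cont, Hd).
  destruct (first_zero h z1 w Hc Hw Hhw) as [z0 [Hz0 [Hhz0 Hnz]]].
  { destruct (cont_pos_near h z1 (Hc z1)) as [del [Hdel Hn]]. lra.
    exists del. split; auto. intros z Hz; apply Hn; lra. }
  assert (Hpos : forall z, z1 <= z < z0 -> h z > 0).
  { intros z Hz. destruct (Req_dec z z1). subst; auto.
    destruct (sign_const h z1 z0 Hc Hnz) as [P|N]. apply P; lra. exfalso.
    set (y := (z1 + z0)/2). assert (h y < 0) by (apply N; unfold y; lra).
    destruct (IVT_gen h z1 y 0 Hc) as [x [Hx Hhx]].
    { split. apply Rle_trans with (h y). apply Rmin_r. lra. apply Rle_trans with (h z1). lra. apply Rmax_l. }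
    rewrite Rmin_left in Hx by (unfold y; lra). rewrite Rmax_right in Hx by (unfold y; lra).
    destruct (Req_dec x z1). subst; lra. apply (Hnz x); auto. unfold y in Hx; lra. }
  assert (Hdd : forall x, z1 <= x < z0 -> Derive (Derive h) x < 0).
  { intros x Hx. rewrite Heq. assert (0 < sin (h x)); [|nra]. apply sin_gt_0. apply Hpos; auto. apply Hr. }
  assert (Hdneg : forall z, z1 < z <= z0 -> Derive h z < 0).
  { intros z Hz. rewrite <- Hd1. apply (decr_neg (Derive h) (Derive (Derive h)) z1 z). lra.
    intros x; apply Derive_correct, Hd. intros x Hx; apply Hdd; lra. }
  destruct (C2_lin_refl h z1 1 Hd) as [R1a [R1b R1c]].
  assert (S1 : forall z, h z = 1 * h (2*z1 - z)).
  { apply (pend_uniq gam h (fun z => 1 * h (2*z1 - z)) z1 Hd R1a Heq).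
    intros z. rewrite R1c, Heq, Rmult_1_l, Rmult_1_l. ring.
    replace (2*z1 - z1) with z1 by ring. ring.
    rewrite R1b. replace (2*z1 - z1) with z1 by ring. rewrite Hd1. ring. }
  destruct (C2_lin_refl h z0 (-1) Hd) as [R0a [R0b R0c]].
  assert (S0 : forall z, h z = -1 * h (2*z0 - z)).
  { apply (pend_uniq gam h (fun z => -1 * h (2*z0 - z)) z0 Hd R0a Heq).
    intros z. rewrite R0c, Heq. replace (-1 * h (2*z0 - z)) with (- h (2*z0 - z)) by ring.
    rewrite sin_neg. ring.
    replace (2*z0 - z0) with z0 by ring. rewrite Hhz0. ring.
    rewrite R0b. replace (2*z0 - z0) with z0 by ring. ring. }
  assert (Hsym1 : forall z, h (2*z1 - z) = h z).
  { intros z. rewrite (S1 z). ring. }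
  assert (Hsym0 : forall z, h (2*z0 - z) = - h z).
  { intros z. rewrite (S0 (2*z0 - z)). replace (2*z0 - (2*z0 - z)) with z by ring. ring. }
  assert (Hhalf : forall v, h (v + 2*(z0 - z1)) = - h v).
  { intros v. replace (v + 2*(z0 - z1)) with (2*z0 - (2*z1 - v)) by ring. rewrite Hsym0, Hsym1. auto. }
  assert (HpT' : forall v, h (v + 4*(z0 - z1)) = h v).
  { intros v. replace (v + 4*(z0-z1)) with ((v + 2*(z0-z1)) + 2*(z0-z1)) by ring. rewrite !Hhalf. ring. }
  assert (Hlt : forall v, z1 < v <= 2*z0 - z1 -> h v < h z1).
  { intros v Hv. destruct (Rle_or_lt v z0).
    - apply (decr_neg h (Derive h) z1 v). lra. intros x; apply Derive_correct, Hd.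
      intros x Hx; apply Hdneg; lra.
    - replace v with (2*z0 - (2*z0 - v)) by ring. rewrite Hsym0.
      assert (h (2*z0 - v) > 0) by (apply Hpos; lra). lra. }
  assert (Hlt2 : forall v, z1 < v < z1 + 4*(z0 - z1) -> h v < h z1).
  { intros v Hv. destruct (Rle_or_lt v (2*z0 - z1)). apply Hlt; lra.
    rewrite <- Hsym1, <- HpT'. apply Hlt. lra. }
  assert (HTeq : T = 4*(z0 - z1)).
  { destruct (Rtotal_order T (4*(z0 - z1))) as [Hl|[He|Hgt]]; auto.
    - exfalso. assert (h (z1 + T) < h z1) by (apply Hlt2; lra). rewrite Hp in H. lra.
    - exfalso. destruct HF as [_ [_ Hmin]]. apply (Hmin (4*(z0 - z1))). lra.
      intros z. exists 0%Z. rewrite HpT'. simpl. ring. }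
  exists z1, z0. repeat split; auto; try lra.
  - intros z Hz. destruct (Rle_or_lt z z0). assert (Derive h z < 0) by (apply Hdneg; lra). lra.
    assert (Derive h z = Derive h (2*z0 - z)).
    { rewrite (Derive_ext h (fun z => -1 * h (2*z0 - z)) z S0), R0b. ring. }
    assert (Derive h (2*z0 - z) < 0) by (apply Hdneg; lra). lra.
  - intros z Hz. destruct (Rle_or_lt z1 z). assert (h z > 0) by (apply Hpos; lra). lra.
    rewrite <- Hsym1. assert (h (2*z1 - z) > 0) by (apply Hpos; lra). lra.
Qed.
Lemma cos_periodZ x (k : Z) : cos (x + 2 * IZR k * PI) = cos x.
Proof. destruct (Z_le_gt_dec 0 k) as [Hk|Hk].
  - rewrite <- (Z2Nat.id k Hk), <- INR_IZR_INZ. apply cos_period.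
  - assert (IZR k = - INR (Z.to_nat (- k))).
    { rewrite INR_IZR_INZ, Z2Nat.id by lia. rewrite opp_IZR. ring. }
    rewrite H. set (n := Z.to_nat (-k)).
    rewrite <- (cos_period (x + 2 * - INR n * PI) n). f_equal. ring. Qed.

Lemma sin_periodZ x (k : Z) : sin (x + 2 * IZR k * PI) = sin x.
Proof. destruct (Z_le_gt_dec 0 k) as [Hk|Hk].
  - rewrite <- (Z2Nat.id k Hk), <- INR_IZR_INZ. apply sin_period.
  - assert (IZR k = - INR (Z.to_nat (- k))).
    { rewrite INR_IZR_INZ, Z2Nat.id by lia. rewrite opp_IZR. ring. }
    rewrite H. set (n := Z.to_nat (-k)).
    rewrite <- (sin_period (x + 2 * - INR n * PI) n). f_equal. ring. Qed.

Lemma shift_C2 f C : C2 f ->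
  C2 (fun t => f t + C) /\ (forall z, Derive (fun t => f t + C) z = Derive f z) /\
  (forall z, Derive (Derive (fun t => f t + C)) z = Derive (Derive f) z).
Proof. intros Hd.
  assert (HD : forall z, Derive (fun t => f t + C) z = Derive f z).
  { intros z. apply is_derive_unique. eapply isd_val. apply (isd_plus f (fun _ => C)).
    apply Derive_correct, Hd. apply isd_const. ring. }
  split; [|split]; auto.
  - intros z. split. exists (Derive f z). eapply isd_val. apply (isd_plus f (fun _ => C)).
    apply Derive_correct, Hd. apply isd_const. ring.
    eapply ex_derive_ext. intros t; symmetry; apply HD. apply Hd.
  - intros z. apply Derive_ext. auto. Qed.

Lemma fp_shift f T C : fundamental_period f T -> fundamental_period (fun z => f z + C) T.
Proof. intros [HT [Hp Hmin]]. split; auto. split.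
  - intros z. destruct (Hp z) as [k Hk]. exists k. rewrite Hk. ring.
  - intros T' HT' Hp'. apply (Hmin T' HT'). intros z. destruct (Hp' z) as [k Hk]. exists k. lra. Qed.

Lemma pend_shift gam E g C : pend gam E g -> (forall z, sin (g z + C) = sin (g z)) ->
  (forall z, cos (g z + C) = cos (g z)) -> pend gam E (fun z => g z + C).
Proof. intros [Hd [Heq Hen]] Hs Hc. destruct (shift_C2 g C Hd) as [A [B D]].
  split; auto. split.
  intros z. rewrite D, Heq, Hs. auto.
  intros z. rewrite B, Hen, Hc. auto. Qed.

Lemma branch gam E g T : 0 < gam -> 0 < E < 2 -> pend gam E g -> fundamental_period g T ->
  exists h, pend gam E h /\ (forall z, -PI < h z < PI) /\ fundamental_period h T /\
    (forall z, cos (h z) = cos (g z)).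
Proof. intros Hg HE HP HF.
  assert (Hcos : forall z, cos (g z) > -1).
  { intros z. destruct HP as [_ [_ Hen]]. specialize (Hen z). pose proof (pow2_ge_0 (Derive g z)). nra. }
  pose proof PI_RGT_0 as Hpi.
  set (m := Z.sub (up ((g 0 + PI) / (2 * PI))) 1).
  set (C := - (2 * IZR m * PI)).
  assert (HsC : forall x, sin (x + C) = sin x).
  { intros x. unfold C. rewrite <- (sin_periodZ (x + - (2 * IZR m * PI)) m). f_equal. ring. }
  assert (HcC : forall x, cos (x + C) = cos x).
  { intros x. unfold C. rewrite <- (cos_periodZ (x + - (2 * IZR m * PI)) m). f_equal. ring. }
  set (h := fun z => g z + C).
  assert (HPh : pend gam E h) by (apply pend_shift; auto).
  assert (Hch : forall z, cos (h z) = cos (g z)) by (intros; unfold h; auto).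
  assert (H0 : -PI < h 0 < PI).
  { destruct (archimed ((g 0 + PI) / (2 * PI))) as [A1 A2].
    assert (IZR m = IZR (up ((g 0 + PI) / (2 * PI))) - 1) by (unfold m; rewrite minus_IZR; auto).
    assert (E1 : 2 * PI * IZR m <= g 0 + PI).
    { rewrite H. assert (HH : IZR (up ((g 0 + PI) / (2 * PI))) <= (g 0 + PI) / (2 * PI) + 1) by lra.
      apply Rmult_le_compat_l with (r := 2 * PI) in HH; [|lra].
      replace (2 * PI * ((g 0 + PI) / (2 * PI) + 1)) with (g 0 + PI + 2*PI) in HH by (field; lra). lra. }
    assert (E2 : g 0 + PI < 2 * PI * (IZR m + 1)).
    { rewrite H. replace (IZR (up ((g 0 + PI) / (2 * PI))) - 1 + 1) with (IZR (up ((g 0 + PI) / (2 * PI)))) by ring.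
      apply Rmult_lt_compat_l with (r := 2 * PI) in A1; [|lra].
      replace (2 * PI * ((g 0 + PI) / (2 * PI))) with (g 0 + PI) in A1 by (field; lra). lra. }
    unfold h, C. split; [|lra].
    destruct (Req_dec (g 0 + - (2 * IZR m * PI)) (-PI)) as [He|]; [|lra].
    exfalso. specialize (Hcos 0). rewrite <- (Hch 0) in Hcos. unfold h, C in Hcos. rewrite He, cos_neg, cos_PI in Hcos. lra. }
  assert (Hcont : continuity h) by (intros x; apply ex_cont, (proj1 HPh)).
  assert (Hnpi : forall z, h z <> PI /\ h z <> - PI).
  { intros z. specialize (Hcos z). rewrite <- Hch in Hcos. split; intros He; rewrite He in Hcos.
    rewrite cos_PI in Hcos; lra. rewrite cos_neg, cos_PI in Hcos; lra. }
  exists h. split; auto. split; [|split]; auto.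
  - intros z. split.
    + destruct (Rlt_or_le (- PI) (h z)); auto. exfalso.
      destruct (IVT_gen h 0 z (-PI) Hcont) as [x [_ Hx]].
      split. apply Rle_trans with (h z). apply Rmin_r. auto. apply Rle_trans with (h 0). lra. apply Rmax_l.
      apply (proj2 (Hnpi x)); auto.
    + destruct (Rlt_or_le (h z) PI); auto. exfalso.
      destruct (IVT_gen h 0 z PI Hcont) as [x [_ Hx]].
      split. apply Rle_trans with (h 0). apply Rmin_l. lra. apply Rle_trans with (h z). auto. apply Rmax_r.
      apply (proj1 (Hnpi x)); auto.
  - apply fp_shift; auto. Qed.
Ltac fixd h := unfold Rdiv; try change (fun x : R => Derive h x) with (Derive h); try change (fun x : R => h x) with h.

Lemma eig_q0 gam E h : pend gam E h ->
  sol (fun z => gam * cos (h z)) (gam * (1 - E/2)) (fun z => cos (h z / 2)).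
Proof. intros [Hd [Heq Hen]].
  assert (D1 : forall z, is_derive (fun z => cos (h z / 2)) z (- sin (h z / 2) * (Derive h z / 2))).
  { intros z. auto_derive. repeat split; first [apply (proj1 (Hd _)) | apply (proj2 (Hd _))]. fixd h. ring. }
  assert (D2 : forall z, is_derive (fun z => - sin (h z / 2) * (Derive h z / 2)) z
     (- cos (h z /2) * (Derive h z/2) * (Derive h z / 2) - sin (h z / 2) * (Derive (Derive h) z / 2))).
  { intros z. auto_derive. repeat split; first [apply (proj1 (Hd _)) | apply (proj2 (Hd _))]. fixd h. ring. }
  assert (HD : forall z, Derive (fun z => cos (h z / 2)) z = - sin (h z / 2) * (Derive h z / 2))
    by (intros; apply is_derive_unique, D1).
  split.
  - intros z. split. eexists; apply D1. eapply ex_derive_ext. intros t; symmetry; apply HD. eexists; apply D2.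
  - intros z. rewrite (Derive_ext _ _ z HD).
    replace (Derive (fun z => - sin (h z / 2) * (Derive h z / 2)) z) with
      (- cos (h z /2) * (Derive h z/2) * (Derive h z / 2) - sin (h z / 2) * (Derive (Derive h) z / 2))
      by (symmetry; apply is_derive_unique, D2).
    rewrite Heq. specialize (Hen z).
    assert (Hc2 : cos (h z) = 1 - 2 * sin (h z / 2) * sin (h z / 2)).
    { rewrite <- cos_2a_sin. f_equal. field. }
    assert (Hs2 : sin (h z) = 2 * sin (h z / 2) * cos (h z / 2)).
    { rewrite <- sin_2a. f_equal. field. }
    rewrite Hc2 in Hen |- *. rewrite Hs2.
    set (S := sin (h z / 2)) in *. set (C := cos (h z / 2)) in *. set (d := Derive h z) in *.
    assert (d * d = 2 * gam * (E - 2 * S * S)) by (replace (d*d) with (d^2) by ring; rewrite Hen; ring).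
    transitivity (- C / 4 * (d * d) + gam * S * S * C + gam * (1 - 2 * S * S) * C). field.
    rewrite H. field. Qed.
Lemma eig_s gam E h : pend gam E h ->
  sol (fun z => gam * cos (h z)) (- gam * E / 2) (fun z => sin (h z / 2)).
Proof. intros [Hd [Heq Hen]].
  assert (D1 : forall z, is_derive (fun z => sin (h z / 2)) z (cos (h z / 2) * (Derive h z / 2))).
  { intros z. auto_derive. repeat split; first [apply (proj1 (Hd _)) | apply (proj2 (Hd _))]. fixd h. ring. }
  assert (D2 : forall z, is_derive (fun z => cos (h z / 2) * (Derive h z / 2)) z
     (- sin (h z /2) * (Derive h z/2) * (Derive h z / 2) + cos (h z / 2) * (Derive (Derive h) z / 2))).
  { intros z. auto_derive. repeat split; first [apply (proj1 (Hd _)) | apply (proj2 (Hd _))]. fixd h. ring. }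
  assert (HD : forall z, Derive (fun z => sin (h z / 2)) z = cos (h z / 2) * (Derive h z / 2))
    by (intros; apply is_derive_unique, D1).
  split.
  - intros z. split. eexists; apply D1. eapply ex_derive_ext. intros t; symmetry; apply HD. eexists; apply D2.
  - intros z. rewrite (Derive_ext _ _ z HD).
    replace (Derive (fun z => cos (h z / 2) * (Derive h z / 2)) z) with
      (- sin (h z /2) * (Derive h z/2) * (Derive h z / 2) + cos (h z / 2) * (Derive (Derive h) z / 2))
      by (symmetry; apply is_derive_unique, D2).
    rewrite Heq. specialize (Hen z).
    assert (Hc2 : cos (h z) = 1 - 2 * sin (h z / 2) * sin (h z / 2)).
    { rewrite <- cos_2a_sin. f_equal. field. }
    assert (Hs2 : sin (h z) = 2 * sin (h z / 2) * cos (h z / 2)).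
    { rewrite <- sin_2a. f_equal. field. }
    assert (Hsc := sin2_cos2 (h z / 2)). unfold Rsqr in Hsc.
    rewrite Hc2 in Hen |- *. rewrite Hs2.
    set (S := sin (h z / 2)) in *. set (C := cos (h z / 2)) in *. set (d := Derive h z) in *.
    assert (d * d = 2 * gam * (E - 2 * S * S)) by (replace (d*d) with (d^2) by ring; rewrite Hen; ring).
    transitivity (- S / 4 * (d * d) - gam * S * (C * C) + gam * (1 - 2 * S * S) * S). field.
    rewrite H. replace (C * C) with (1 - S * S) by lra. field. Qed.

Lemma eig_u gam E h : pend gam E h ->
  sol (fun z => gam * cos (h z)) 0 (Derive h).
Proof. intros [Hd [Heq Hen]].
  assert (D : forall z, is_derive (fun z => - gam * sin (h z)) z (- gam * (cos (h z) * Derive h z))).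
  { intros z. auto_derive. apply (proj1 (Hd z)). fixd h. ring. }
  split.
  - intros z. split. apply Hd. eapply ex_derive_ext. intros t; symmetry; apply Heq. eexists; apply D.
  - intros z. rewrite (Derive_ext _ _ z Heq).
    replace (Derive (fun z => - gam * sin (h z)) z) with (- gam * (cos (h z) * Derive h z))
      by (symmetry; apply is_derive_unique, D). ring. Qed.
Lemma sin_nz_range x : -PI < x < PI -> x <> 0 -> sin x <> 0.
Proof. intros H Hn. destruct (Rtotal_order x 0) as [Hl|[He|Hg]].
  assert (sin x < 0) by (apply sin_neg_range; lra). lra. contradiction.
  assert (sin x > 0) by (apply sin_gt_0; lra). lra. Qed.

Lemma full_setup gam E T h : 0 < gam -> 0 < E < 2 -> pend gam E h ->
  (forall z, -PI < h z < PI) -> fundamental_period h T ->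
  exists z1 z0, 4*(z0 - z1) = T /\
    hill_setup (fun z => gam * cos (h z)) gam z1 z0 (gam * (1 - E/2)) (- gam * E / 2)
      (fun z => cos (h z / 2)) (Derive h) (fun z => sin (h z / 2)) /\
    (forall z, cos (h (z + T) / 2) = cos (h z / 2)) /\
    (forall z, Derive h (z + T) = Derive h z) /\
    (forall z, sin (h (z + T) / 2) = sin (h z / 2)).
Proof. intros Hg HE HP Hr HF.
  destruct (pend_struct gam E T h Hg HE HP Hr HF) as
    [z1 [z0 [HT [H01 [Hs1 [Hs0 [Hd1 [Hz0 [Hun [Hsn Hp]]]]]]]]]].
  assert (HP' := HP). destruct HP' as [Hd [Heq Hen]].
  assert (Hdp := P_dperiodic h T Hd Hp).
  destruct (C2_lin_refl h z0 (-1) Hd) as [_ [R0b _]].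
  assert (Hd0 : forall z, Derive h (2*z0 - z) = Derive h z).
  { intros z. assert (Hx : forall t, h t = -1 * h (2*z0 - t)).
    { intros t. rewrite Hs0. ring. }
    rewrite (Derive_ext _ _ z Hx), R0b. ring. }
  assert (Dq0 : forall z, Derive (fun z => cos (h z / 2)) z = - sin (h z / 2) * (Derive h z / 2)).
  { intros z. apply is_derive_unique. auto_derive. apply (proj1 (Hd z)). fixd h. ring. }
  assert (Hh1 : h z1 <> 0).
  { intros H. specialize (Hen z1). rewrite Hd1, H, cos_0 in Hen. nra. }
  exists z1, z0. split; auto. split; [|split; [|split]].
  - unfold hill_setup.
    split. { intros z. rewrite Rabs_mult, (Rabs_right gam) by lra. pose proof (COS_bound (h z)).
      assert (Rabs (cos (h z)) <= 1) by (apply Rabs_le; lra).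
      apply Rle_trans with (gam * 1). apply Rmult_le_compat_l; lra. lra. }
    split. { auto. }
    split. { intros z. cbv beta. rewrite Hs1. auto. }
    split. { intros z. cbv beta. rewrite Hs0, cos_neg. auto. }
    split. { apply eig_q0; auto. }
    split. { apply (eig_u gam E); auto. }
    split. { apply eig_s; auto. }
    split. { split. assert (0 < gam * E) by (apply Rmult_lt_0_compat; lra). lra.
             apply Rmult_lt_0_compat; lra. }
    split. { intros z. assert (0 < cos (h z / 2)); [|lra]. apply cos_gt_0; specialize (Hr z); lra. }
    split. { rewrite Dq0, Hd1. lra. }
    split. { rewrite Dq0, Hz0. replace (0/2) with 0 by field. rewrite sin_0. lra. }
    split. { auto. }
    split. { rewrite Hd0. auto. }
    split. { rewrite Heq. assert (sin (h z1) <> 0) by (apply sin_nz_range; auto).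
             apply Rmult_integral_contrapositive. split; lra. }
    split. { intros z Hz. apply Hun. auto. }
    { intros z Hz. apply sin_nz_range. specialize (Hr z); lra.
      intros H. apply (Hsn z Hz). lra. }
  - intros z. rewrite Hp. auto.
  - auto.
  - intros z. rewrite Hp. auto. Qed.
Lemma pmult_one gam f T nu p : periodic_eigenvalue gam f T nu ->
  (forall q, periodic_solution gam f T nu q -> exists al, forall z, q z = al * p z) ->
  pmult gam f T nu = 1%nat.
Proof. intros He Hp. unfold pmult.
  destruct (excluded_middle_informative (periodic_eigenspace_dim_ge2 gam f T nu)) as [D|D].
  - exfalso. destruct D as [q1 [q2 [S1 [S2 Hind]]]].
    destruct (Hp q1 S1) as [a1 H1]. destruct (Hp q2 S2) as [a2 H2].
    destruct (Hind a2 (- a1)) as [A B]. intros z. rewrite H1, H2. ring.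
    assert (a1 = 0) by lra.
    destruct (Hind 1 0) as [C _]. intros z. rewrite H1. subst a1. ring. lra.
  - destruct (excluded_middle_informative (periodic_eigenvalue gam f T nu)); auto. contradiction. Qed.

Lemma pmult_ge1 gam f T nu : periodic_eigenvalue gam f T nu -> (1 <= pmult gam f T nu)%nat.
Proof. intros He. unfold pmult.
  destruct (excluded_middle_informative (periodic_eigenspace_dim_ge2 gam f T nu)). lia.
  destruct (excluded_middle_informative (periodic_eigenvalue gam f T nu)). lia. contradiction. Qed.

Lemma spectral_conclusion gam f T mu0 mu2 q0 u s :
  (forall nu q, periodic_solution gam f T nu q -> (exists z, q z <> 0) ->
     (nu = mu0 /\ exists al, forall z, q z = al * q0 z) \/
     (nu = 0 /\ exists al, forall z, q z = al * u z) \/ nu <= mu2) ->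
  periodic_solution gam f T mu0 q0 -> (exists z, q0 z <> 0) ->
  periodic_solution gam f T 0 u -> (exists z, u z <> 0) ->
  periodic_solution gam f T mu2 s -> (exists z, s z <> 0) -> mu2 < 0 < mu0 ->
  periodic_eig_index gam f T 1 0 /\
  exists m2, periodic_eig_index gam f T 2 m2 /\ m2 < 0.
Proof. intros Hcl S0 N0 Su Nu Ss Ns Hmu.
  assert (E0 : periodic_eigenvalue gam f T mu0) by (exists q0; auto).
  assert (Eu : periodic_eigenvalue gam f T 0) by (exists u; auto).
  assert (Es : periodic_eigenvalue gam f T mu2) by (exists s; auto).
  assert (Hev : forall nu, periodic_eigenvalue gam f T nu -> nu = mu0 \/ nu = 0 \/ nu <= mu2).
  { intros nu [q [Sq Nq]]. destruct (Hcl nu q Sq Nq) as [[? _]|[[? _]|?]]; auto. }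
  assert (P0 : pmult gam f T mu0 = 1%nat).
  { apply (pmult_one _ _ _ _ q0 E0). intros q Sq.
    destruct (classic (exists z, q z <> 0)) as [N|N].
    - destruct (Hcl mu0 q Sq N) as [[_ H]|[[H _]|H]]; auto; lra.
    - exists 0. intros z. destruct (Req_dec (q z) 0). rewrite H; ring. exfalso; eauto. }
  assert (Pu : pmult gam f T 0 = 1%nat).
  { apply (pmult_one _ _ _ _ u Eu). intros q Sq.
    destruct (classic (exists z, q z <> 0)) as [N|N].
    - destruct (Hcl 0 q Sq N) as [[H _]|[[_ H]|H]]; auto; lra.
    - exists 0. intros z. destruct (Req_dec (q z) 0). rewrite H; ring. exfalso; eauto. }
  assert (Ps := pmult_ge1 _ _ _ _ Es).
  split.
  - exists 1%nat, 2%nat. split; [|split].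
    + exists (mu0 :: nil)%list. split. constructor. simpl; tauto. constructor.
      split. simpl. split. intros [H|[]]; subst; split; auto; lra.
      intros [He Hl]. destruct (Hev nu He) as [?|[?|?]]; auto; lra.
      simpl. rewrite P0. auto.
    + exists (mu0 :: 0 :: nil)%list. split. constructor. simpl. intros [H|[]]; lra.
      constructor. simpl; tauto. constructor.
      split. simpl. split. intros [H|[H|[]]]; subst; split; auto; lra.
      intros [He Hl]. destruct (Hev nu He) as [?|[?|?]]; auto; lra.
      simpl. rewrite P0, Pu. auto.
    + lia.
  - exists mu2. split; [|lra].
    exists 2%nat, (2 + pmult gam f T mu2)%nat. split; [|split].
    + exists (mu0 :: 0 :: nil)%list. split. constructor. simpl. intros [H|[]]; lra.
      constructor. simpl; tauto. constructor.
      split. simpl. split. intros [H|[H|[]]]; subst; split; auto; lra.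
      intros [He Hl]. destruct (Hev nu He) as [?|[?|?]]; auto; lra.
      simpl. rewrite P0, Pu. auto.
    + exists (mu0 :: 0 :: mu2 :: nil)%list. split. constructor. simpl. intros [H|[H|[]]]; lra.
      constructor. simpl. intros [H|[]]; lra. constructor. simpl; tauto. constructor.
      split. simpl. split. intros [H|[H|[H|[]]]]; subst; split; auto; lra.
      intros [He Hl]. destruct (Hev nu He) as [?|[?|?]]; auto. right; right; left; lra.
      simpl. rewrite P0, Pu. lia.
    + lia. Qed.
Lemma psol_of_sol gam1 f T V mu q : (forall z, gam1 * cos (f z) = V z) -> sol V mu q ->
  (forall z, q (z + T) = q z) -> periodic_solution gam1 f T mu q.
Proof. intros HV [Hd He] Hp. split; [|split]; auto. intros z. rewrite HV. apply He. Qed.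

Lemma sol_of_psol gam1 f T V mu q : (forall z, gam1 * cos (f z) = V z) ->
  periodic_solution gam1 f T mu q -> sol V mu q /\ (forall z, q (z + T) = q z).
Proof. intros HV [Hd [He Hp]]. split; auto. split; auto. intros z. rewrite <- HV. apply He. Qed.

Lemma reduce c f E T : c ^ 2 <> 1 -> traveling_wave c f -> has_energy c f E -> 0 < E < 2 ->
  fundamental_period f T ->
  exists gam E' g, 0 < gam /\ 0 < E' < 2 /\ pend gam E' g /\ fundamental_period g T /\
    forall z, / (c ^ 2 - 1) * cos (f z) = gam * cos (g z).
Proof. intros Hc [Hd Heq] Hen HE HF.
  assert (Hk : c ^ 2 - 1 <> 0) by lra.
  destruct (Rlt_or_le 0 (c^2 - 1)) as [Hp|Hn].
  - exists (/ (c^2 - 1)), E, f. split. apply Rinv_0_lt_compat; auto. split; auto. split; [|split; auto].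
    split; [exact Hd|split].
    + intros z. specialize (Heq z). apply Rmult_eq_reg_l with (c^2 - 1); auto.
      replace ((c ^ 2 - 1) * (- / (c ^ 2 - 1) * sin (f z))) with (- sin (f z)) by (field; auto). lra.
    + intros z. specialize (Hen z). apply Rmult_eq_reg_l with (c^2 - 1); auto.
      replace ((c ^ 2 - 1) * (2 * / (c ^ 2 - 1) * (E - 1 + cos (f z)))) with (2 * (E - 1 + cos (f z))) by (field; auto).
      rewrite <- Hen. field.
  - assert (Hn' : c^2 - 1 < 0) by lra.
    destruct (shift_C2 f PI Hd) as [A [B D]].
    exists (- / (c^2 - 1)), (2 - E), (fun z => f z + PI).
    split. assert (/ (c^2-1) < 0) by (apply Rinv_lt_0_compat; auto). lra.
    split. lra. split; [|split].
    + split; [exact A|split].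
      * intros z. rewrite D, neg_sin. specialize (Heq z). apply Rmult_eq_reg_l with (c^2 - 1); auto.
        replace ((c ^ 2 - 1) * (- - / (c ^ 2 - 1) * - sin (f z))) with (- sin (f z)) by (field; auto). lra.
      * intros z. rewrite B, neg_cos. specialize (Hen z). apply Rmult_eq_reg_l with (c^2 - 1); auto.
        replace ((c ^ 2 - 1) * (2 * - / (c ^ 2 - 1) * (2 - E - 1 + - cos (f z)))) with (2 * (E - 1 + cos (f z))) by (field; auto).
        rewrite <- Hen. field.
    + apply fp_shift; auto.
    + intros z. rewrite neg_cos. ring. Qed.

Theorem lemma3p7 (c : R) (f : R -> R) (E T : R) :
  c ^ 2 <> 1 ->
  traveling_wave c f ->
  has_energy c f E ->
  0 < E < 2 ->
  fundamental_period f T ->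
  periodic_eig_index (/ (c ^ 2 - 1)) f T 1 0 /\
  exists mu2, periodic_eig_index (/ (c ^ 2 - 1)) f T 2 mu2 /\ mu2 < 0.
Proof. intros Hc Htw Hen HE HF.
  destruct (reduce c f E T Hc Htw Hen HE HF) as [gam [E' [g [Hg [HE' [HP [HFg HVg]]]]]]].
  destruct (branch gam E' g T Hg HE' HP HFg) as [h [HPh [Hr [HFh Hch]]]].
  assert (HV : forall z, / (c ^ 2 - 1) * cos (f z) = (fun z => gam * cos (h z)) z).
  { intros z. rewrite HVg, Hch. auto. }
  destruct (full_setup gam E' T h Hg HE' HPh Hr HFh) as [z1 [z0 [HT [HS [Pq0 [Pu Ps]]]]]].
  assert (HS' := HS).
  destruct HS' as (HM & H01 & HV1 & HV0 & S0 & Su & Ss & Hmu & Hq0 & Hq0'1 & Hq0'0 & Hu1 & Hu2 & Hu'1 & Hu & Hs).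
  apply (spectral_conclusion _ f T (gam * (1 - E'/2)) (- gam * E' / 2)
           (fun z => cos (h z / 2)) (Derive h) (fun z => sin (h z / 2))).
  - intros nu q Sq Nq. destruct (sol_of_psol _ _ _ _ _ _ HV Sq) as [Sq' Hpq].
    apply (hill_classify _ gam z1 z0 _ _ _ _ _ nu q HS Sq'); auto.
    rewrite HT. auto.
  - apply (psol_of_sol _ _ _ _ _ _ HV S0). auto.
  - exists 0. apply Hq0.
  - apply (psol_of_sol _ _ _ _ _ _ HV Su). auto.
  - exists ((z1 + z0)/2). apply Hu. lra.
  - apply (psol_of_sol _ _ _ _ _ _ HV Ss). auto.
  - exists ((z1 + z0)/2). apply Hs. lra.
  - auto. Qed.
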